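(* Let $f : X \to \mathbb{R}$ and suppose there is a closed set $C \subseteq X$ such that $\inf_{x \in C} \mathrm{osc}_f(C,x) > 0$. Then Player I has a winning strategy in $\Gamma'(f)$.
   Context: Let $A$ be a non-empty countable set and $T$ a pruned tree on $A$ (a set of finite sequences of elements of $A$, closed under initial segments, in which every sequence has a proper extension in $T$). Let $X$ be the set of infinite branches of $T$, with the topology generated by the cylinder sets $O(s) = \{x \in X : s \text{ is an initial segment of } x\}$, $s \in T$. For closed $C \subseteq X$ and $x \in C$, $\mathrm{osc}_f(C,x) = \inf_{s \in T,\, x \in O(s)} \sup_{y,z \in O(s) \cap C} |f(y) - f(z)|$. The game $\Gamma'(f)$: Player I and Player II alternate, Player I moving first; Player I plays $x_0, x_1, \dots \in A$ subject to $(x_0,\dots,x_t) \in T$ for all $t$, and after each move $x_t$ Player II plays a pair of reals $(v_t,w_t)$; Player II wins iff $f(x_0,x_1,\dots) = \limsup_t v_t = \liminf_t w_t$; otherwise Player I wins. *)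

(* Defs.v *)
From HB Require Import structures.
From mathcomp Require Import all_boot all_order all_algebra.
From mathcomp Require Import all_classical all_reals all_analysis.
Unset Printing Implicit Defensive.
Import Order.TTheory GRing.Theory Num.Theory.
Local Open Scope classical_set_scope.
Local Open Scope ring_scope.

Section Trees.
Variable A : countType.

Definition is_tree (T : set (seq A)) : Prop :=
  forall s t : seq A, T (s ++ t) -> T s.

Definition is_pruned (T : set (seq A)) : Prop :=
  forall s, T s -> exists t : seq A, t <> [::] /\ T (s ++ t).

Definition branch (T : set (seq A)) (x : nat -> A) : Prop :=
  forall n, T (mkseq x n).

Definition Branches (T : set (seq A)) := {x : nat -> A | branch T x}.

Definition cyl (T : set (seq A)) (s : seq A) : set (Branches T) :=
  fun x => mkseq (proj1_sig x) (size s) = s.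

(* Open sets of the topology generated by the cylinders O(s), s \in T
   (which form a basis): unions of cylinders. *)
Definition cyl_open (T : set (seq A)) (U : set (Branches T)) : Prop :=
  forall x, U x -> exists s, T s /\ cyl T s x /\ cyl T s `<=` U.

Definition cyl_closed (T : set (seq A)) (C : set (Branches T)) : Prop :=
  cyl_open T (~` C).

Definition osc {R : realType} (T : set (seq A)) (f : Branches T -> R)
  (C : set (Branches T)) (x : Branches T) : \bar R :=
  ereal_inf [set ereal_sup [set (`|f yz.1 - f yz.2|)%:E |
                               yz in [set yz : Branches T * Branches T |
                                        (cyl T s `&` C) yz.1 /\
                                        (cyl T s `&` C) yz.2]]
            | s in [set s | T s /\ cyl T s x]].

(* The play of Player I's moves produced by a strategy sigma (a function of
   Player II's previous moves) against Player II's moves (v t, w t). *)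
Definition play_I {R : realType} (sigma : seq (R * R) -> A) (v w : nat -> R)
  : nat -> A :=
  fun t => sigma [seq (v i, w i) | i <- iota 0 t].

Definition I_wins_Gamma' {R : realType} (T : set (seq A))
  (f : Branches T -> R) : Prop :=
  exists sigma : seq (R * R) -> A,
    forall v w : nat -> R,
      (forall t, T (mkseq (play_I sigma v w) t.+1)) /\
      forall x : Branches T, proj1_sig x = play_I sigma v w ->
        ~ ((f x)%:E = limn_esup (fun t => (v t)%:E) /\
           (f x)%:E = limn_einf (fun t => (w t)%:E)).
End Trees.
Arguments is_tree {A}.
Arguments is_pruned {A}.
Arguments branch {A}.
Arguments Branches {A}.
Arguments cyl {A}.
Arguments cyl_open {A}.
Arguments cyl_closed {A}.
Arguments osc {A R}.
Arguments play_I {A R}.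
Arguments I_wins_Gamma' {A R}.

(* Main.v *)
Require Import Defs.
From HB Require Import structures.
From mathcomp Require Import all_boot all_order all_algebra.
From mathcomp Require Import all_classical all_reals all_analysis.
From mathcomp Require Import ring lra.
Import Order.TTheory GRing.Theory Num.Theory.
Local Open Scope classical_set_scope.
Local Open Scope ring_scope.
Lemma esup_facts (R : realType) (u : nat -> R) (L c : R) : 0 < c ->
  limn_esup (fun t => (u t)%:E) = L%:E ->
  (exists N, forall t, (N <= t)%N -> u t < L + c) /\
  (forall N, exists t, (N <= t)%N /\ L - c < u t).
Proof.
move=> c0; rewrite /limn_esup /limf_esup => H; split.
  have : (ereal_inf [set ereal_sup [set (u x)%:E | x in V] | V in \oo] < (L + c)%:E)%E.
    by rewrite H lte_fin ltrDl.
  move/ereal_inf_lt => [_ [V [N _ HN] <-]] Hlt.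
  exists N => t Nt; rewrite -lte_fin; apply: le_lt_trans Hlt.
  by apply: ereal_sup_ubound; exists t => //; apply: HN.
move=> N; apply: contrapT => Hn.
have : (ereal_sup [set (u x)%:E | x in [set n | (N <= n)%N]] <= (L - c)%:E)%E.
  apply: ge_ereal_sup => _ [t /= Nt <-]; rewrite lee_fin leNgt; apply/negP => Ht.
  by apply: Hn; exists t.
have : (L%:E <= ereal_sup [set (u x)%:E | x in [set n | (N <= n)%N]])%E.
  rewrite -H; apply: ereal_inf_lbound; exists [set n | (N <= n)%N] => //.
  by exists N.
move=> h1 h2; have := le_trans h1 h2; rewrite lee_fin => h; have : c <= 0 by lra.
by rewrite leNgt c0.
Qed.
Lemma cyl_agree (A : countType) (T : set (seq A)) (s : seq A) (y : Branches T) :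
  cyl T s y -> forall i, (i < size s)%N -> proj1_sig y i = nth (proj1_sig y 0) s i.
Proof.
rewrite /cyl => H i Hi; by rewrite -H nth_mkseq.
Qed.

Lemma osc_split (R : realType) (A : countType) (T : set (seq A))
  (f : Branches T -> R) (C : set (Branches T)) (e : R) : 0 < e ->
  (forall x, C x -> (e%:E <= osc T f C x)%E) ->
  forall y n, C y -> exists z, C z /\ (forall i, (i < n)%N -> proj1_sig z i = proj1_sig y i)
     /\ e / 4 < `|f z - f y|.
Proof.
move=> e0 He y n Cy.
pose s := mkseq (proj1_sig y) n.
have Ts : T s by exact: (proj2_sig y n).
have cys : cyl T s y by rewrite /cyl /s size_mkseq.
have := He y Cy; rewrite /osc => h.
have : (e%:E <= ereal_sup [set (`|f yz.1 - f yz.2|)%:E |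
                               yz in [set yz : Branches T * Branches T |
                                        (cyl T s `&` C) yz.1 /\
                                        (cyl T s `&` C) yz.2]])%E.
  by apply: le_trans h _; apply: ereal_inf_lbound; exists s.
move=> h2.
have : ((e/2)%:E < ereal_sup [set (`|f yz.1 - f yz.2|)%:E |
                               yz in [set yz : Branches T * Branches T |
                                        (cyl T s `&` C) yz.1 /\
                                        (cyl T s `&` C) yz.2]])%E.
  by apply: lt_le_trans h2; rewrite lte_fin; lra.
move=> /ereal_sup_gt [_ [[a b] /= [[ca Ca] [cb Cb]] <-]]; rewrite lte_fin => hab.
have agr : forall z, cyl T s z -> forall i, (i < n)%N -> proj1_sig z i = proj1_sig y i.
  move=> z cz i ilt; rewrite (@cyl_agree _ _ _ _ cz) ?size_mkseq // (@cyl_agree _ _ _ _ cys) ?size_mkseq //.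
  by rewrite /s !nth_mkseq.
have [ha|ha] := ltP (e / 4) `|f a - f y|.
  by exists a; split => //; split => //; exact: agr.
exists b; split => //; split; first exact: agr.
have : `|f a - f b| <= `|f a - f y| + `|f y - f b|.
  by rewrite (_ : f a - f b = (f a - f y) + (f y - f b)) ?ler_normD //; ring.
move=> tri; rewrite distrC; lra.
Qed.

Record st (A : countType) (T : set (seq A)) :=
  St { tg : Branches T; tm : nat; fv : bool; fw : bool }.
Arguments St {A T}.
Arguments tg {A T}.
Arguments tm {A T}.
Arguments fv {A T}.
Arguments fw {A T}.

Definition swb {R : realType} {A : countType} {T : set (seq A)}
  (f : Branches T -> R) (c : R) (s : st A T) (p : R * R) : bool :=
  (fv s || (`|p.1 - f (tg s)| < c)) && (fw s || (`|p.2 - f (tg s)| < c)).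

Definition step {R : realType} {A : countType} {T : set (seq A)}
  (f : Branches T -> R) (c : R) (newt : Branches T -> nat -> Branches T)
  (s : st A T) (p : R * R) : st A T :=
  if swb f c s p then St (newt (tg s) (tm s).+1) (tm s).+1 false false
  else St (tg s) (tm s).+1 (fv s || (`|p.1 - f (tg s)| < c))
                            (fw s || (`|p.2 - f (tg s)| < c)).

Lemma branch_eq (A : countType) (T : set (seq A)) (x y : Branches T) :
  proj1_sig x = proj1_sig y -> x = y.
Proof.
case: x => x hx; case: y => y hy /= exy; subst y.
by rewrite (Prop_irrelevance hx hy).
Qed.

Theorem mainTheorem17 (R : realType) (A : countType) (a0 : A)
  (T : set (seq A)) (HT : is_tree T) (HP : is_pruned T)
  (f : Branches T -> R) (C : set (Branches T))
  (HC : cyl_closed T C) (HCne : C !=set0)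
  (Hosc : (0 < ereal_inf [set osc T f C x | x in C])%E) :
  I_wins_Gamma' T f.
Proof.
have [e [e0 He]] : exists e : R, 0 < e /\ forall x, C x -> (e%:E <= osc T f C x)%E.
  move: Hosc; case E : (ereal_inf _) => [r| |] // r0.
  - exists r; split; first by rewrite -lte_fin.
    by move=> x Cx; rewrite -E; apply: ereal_inf_lbound; exists x.
  - exists 1; split => // x Cx.
    have : (+oo <= osc T f C x)%E.
      by rewrite -E; apply: ereal_inf_lbound; exists x.
    by rewrite leye_eq => /eqP ->; rewrite leey.
have exnew : forall (y : Branches T) (n : nat), exists z, C y ->
    C z /\ (forall i, (i < n)%N -> proj1_sig z i = proj1_sig y i)
     /\ e / 4 < `|f z - f y|.
  move=> y n; have [Cy|nCy] := pselect (C y).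
    by have [z Hz] := @osc_split R A T f C e e0 He y n Cy; exists z.
  by exists y.
pose newt y n := proj1_sig (cid (exnew y n)).
have Hnewt : forall y n, C y -> C (newt y n) /\
    (forall i, (i < n)%N -> proj1_sig (newt y n) i = proj1_sig y i)
     /\ e / 4 < `|f (newt y n) - f y|.
  by move=> y n; exact: (proj2_sig (cid (exnew y n))).
clearbody newt.
have [y0 Cy0] := HCne.
pose c := e / 16.
have c0 : 0 < c by rewrite /c; lra.
pose init : st A T := St y0 0 false false.
pose run (l : seq (R * R)) := foldl (step f c newt) init l.
exists (fun l => proj1_sig (tg (run l)) (size l)) => v w.
pose S t := run [seq (v i, w i) | i <- iota 0 t].
have HS : forall t, S t.+1 = step f c newt (S t) (v t, w t).
  by move=> t; rewrite /S /run -addn1 iotaD map_cat foldl_cat add0n.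
have Hplay : forall t, play_I (fun l => proj1_sig (tg (run l)) (size l)) v w t
    = proj1_sig (tg (S t)) t.
  by move=> t; rewrite /play_I size_map size_iota.
have Htm : forall t, tm (S t) = t.
  elim=> [//|t IH]; rewrite HS /step; by case: ifP => _ /=; rewrite IH.
have HCS : forall t, C (tg (S t)).
  elim=> [//|t IH]; rewrite HS /step; case: ifP => _ //=.
  by case: (Hnewt (tg (S t)) (tm (S t)).+1 IH).
pose sw t := swb f c (S t) (v t, w t).
have Hns : forall t, ~~ sw t -> tg (S t.+1) = tg (S t) /\
    fv (S t.+1) = (fv (S t) || (`|v t - f (tg (S t))| < c)) /\
    fw (S t.+1) = (fw (S t) || (`|w t - f (tg (S t))| < c)).
  by move=> t; rewrite /sw HS /step => /negbTE ->.
have Hs : forall t, sw t -> tg (S t.+1) = newt (tg (S t)) t.+1 /\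
    fv (S t.+1) = false /\ fw (S t.+1) = false.
  by move=> t; rewrite /sw HS /step => ->; rewrite Htm.
have Hagr1 : forall t i, (i <= t)%N ->
    proj1_sig (tg (S t.+1)) i = proj1_sig (tg (S t)) i.
  move=> t i it; case: (boolP (sw t)) => swt.
    have [-> _] := Hs t swt.
    by have [_ [H _]] := Hnewt (tg (S t)) t.+1 (HCS t); apply: H.
  by have [-> _] := Hns t swt.
have Hagr : forall t k i, (i <= t)%N ->
    proj1_sig (tg (S (t + k)%N)) i = proj1_sig (tg (S t)) i.
  move=> t; elim=> [|k IH] i it; first by rewrite addn0.
  rewrite addnS Hagr1; first exact: IH.
  exact: leq_trans it (leq_addr _ _).
have Hpl : forall t i, (i <= t)%N ->
    play_I (fun l => proj1_sig (tg (run l)) (size l)) v w i =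
    proj1_sig (tg (S t)) i.
  move=> t i it; rewrite Hplay.
  by have := Hagr i (t - i)%N i (leqnn i); rewrite subnKC.
split.
  move=> t; have -> : mkseq (play_I (fun l => proj1_sig (tg (run l)) (size l)) v w) t.+1
      = mkseq (proj1_sig (tg (S t))) t.+1.
    rewrite /mkseq; apply/eq_in_map => i; rewrite mem_iota add0n => /andP [_ it].
    exact: Hpl.
  exact: (proj2_sig (tg (S t)) t.+1).
move=> x Hx [Hv Hw].
have hc : c = e / 16 by [].
have [[N1 Hv1] Hv2] := @esup_facts R v (f x) c c0 (esym Hv).
have Hw' : limn_esup (fun t => (- w t)%:E) = (- f x)%:E.
  by rewrite EFinN Hw /limn_einf oppeK.
have [[N2 Hw1] Hw2] := @esup_facts R (fun t => - w t) (- f x) c c0 Hw'.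
have Iv : forall t, fv (S t) -> exists t1, (t1 < t)%N /\
    `|v t1 - f (tg (S t))| < c /\ forall u, (t1 <= u < t)%N -> ~~ sw u.
  elim=> [//|t IH]; case: (boolP (sw t)) => swt.
    by have [_ [-> _]] := Hs t swt.
  have [Htg [-> _]] := Hns t swt; rewrite Htg.
  case/orP => [/IH [t1 [lt [cl no]]]|cl].
    exists t1; split; first by rewrite ltnS ltnW.
    split => // u /andP [h1 h2]; have [->|ne] := eqVneq u t => //.
    by apply: no; rewrite h1 ltn_neqAle ne -ltnS h2.
  exists t; split => //; split => // u /andP [h1 h2].
  by have -> : u = t by apply/eqP; rewrite eqn_leq h1 -ltnS h2.
have Iw : forall t, fw (S t) -> exists t1, (t1 < t)%N /\
    `|w t1 - f (tg (S t))| < c /\ forall u, (t1 <= u < t)%N -> ~~ sw u.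
  elim=> [//|t IH]; case: (boolP (sw t)) => swt.
    by have [_ [_ ->]] := Hs t swt.
  have [Htg [_ ->]] := Hns t swt; rewrite Htg.
  case/orP => [/IH [t1 [lt [cl no]]]|cl].
    exists t1; split; first by rewrite ltnS ltnW.
    split => // u /andP [h1 h2]; have [->|ne] := eqVneq u t => //.
    by apply: no; rewrite h1 ltn_neqAle ne -ltnS h2.
  exists t; split => //; split => // u /andP [h1 h2].
  by have -> : u = t by apply/eqP; rewrite eqn_leq h1 -ltnS h2.
have Hcst : forall a k, (forall u, (a <= u < a + k)%N -> ~~ sw u) ->
    tg (S (a + k)%N) = tg (S a).
  move=> a; elim=> [|k IH] H; first by rewrite addn0.
  have hk : ~~ sw (a + k)%N by apply: H; rewrite leq_addr /= addnS ltnS.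
  rewrite addnS; have [-> _] := Hns _ hk.
  apply: IH => u /andP [h1 h2]; apply: H; rewrite h1 /=.
  by rewrite addnS ltnS ltnW.
have [[T0 HT0]|Hinf] := pselect (exists T0, forall t, (T0 <= t)%N -> ~~ sw t).
  have Hy : forall t, (T0 <= t)%N -> tg (S t) = tg (S T0).
    move=> t h; rewrite -(subnKC h); apply: Hcst => u /andP [h1 _].
    exact: HT0.
  have xe : x = tg (S T0).
    apply: branch_eq; rewrite Hx; apply: funext => i.
    case: (leqP T0 i) => h; first by rewrite Hplay Hy.
    exact: Hpl (ltnW h).
  have [t1 [h1 h1']] := Hv2 (maxn T0 N1).
  have h1'' := Hv1 t1 (leq_trans (leq_maxr _ _) h1).
  have [t2 [h2 h2']] := Hw2 (maxn T0 N2).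
  have h2'' := Hw1 t2 (leq_trans (leq_maxr _ _) h2).
  have T1 : (T0 <= t1)%N := leq_trans (leq_maxl _ _) h1.
  have T2 : (T0 <= t2)%N := leq_trans (leq_maxl _ _) h2.
  have monv : forall t k, (T0 <= t)%N -> fv (S t) -> fv (S (t + k)%N).
    move=> t; elim=> [|k IH] h ht; first by rewrite addn0.
    rewrite addnS; have [_ [-> _]] := Hns (t + k)%N (HT0 (t + k)%N (leq_trans h (leq_addr k t))).
    by rewrite IH.
  have monw : forall t k, (T0 <= t)%N -> fw (S t) -> fw (S (t + k)%N).
    move=> t; elim=> [|k IH] h ht; first by rewrite addn0.
    rewrite addnS; have [_ [_ ->]] := Hns (t + k)%N (HT0 (t + k)%N (leq_trans h (leq_addr k t))).
    by rewrite IH.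
  have fv1 : fv (S t1.+1).
    have [_ [-> _]] := Hns _ (HT0 _ T1).
    rewrite Hy // -xe; apply/orP; right; rewrite ltr_norml; apply/andP; split; lra.
  have fw1 : fw (S t2.+1).
    have [_ [_ ->]] := Hns _ (HT0 _ T2).
    rewrite Hy // -xe; apply/orP; right; rewrite ltr_norml; apply/andP; split; lra.
  pose m := maxn t1 t2.
  have fvm : fv (S m.+1).
    have := monv t1.+1 (m - t1)%N (leq_trans T1 (leqnSn _)) fv1.
    by rewrite addSn subnKC // leq_maxl.
  have fwm : fw (S m.+1).
    have := monw t2.+1 (m - t2)%N (leq_trans T2 (leqnSn _)) fw1.
    by rewrite addSn subnKC // leq_maxr.
  have : ~~ sw m.+1 by apply: HT0; rewrite ltnW // ltnS (leq_trans T1) // leq_maxl.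
  by rewrite /sw /swb fvm fwm.
have Hinf' : forall T0, exists t, (T0 <= t)%N && sw t.
  move=> T0; apply: contrapT => H; apply: Hinf; exists T0 => t h.
  by apply/negP => swt; apply: H; exists t; rewrite h swt.
have D : forall a b, (maxn N1 N2 <= a)%N -> (a < b)%N -> sw a -> sw b ->
    `|f (tg (S b)) - f x| < 2 * c.
  move=> a b Na ab swa swb0.
  have := swb0; rewrite /sw /swb /= => /andP [hv hw].
  have [t1 [t1le [cl1 no1]]] : exists t1, (t1 <= b)%N /\
      `|v t1 - f (tg (S b))| < c /\ forall u, (t1 <= u < b)%N -> ~~ sw u.
    case/orP: hv => [/Iv [t1 [lt [cl no]]]|cl].
      by exists t1; split => //; exact: ltnW.
    exists b; split => //; split => // u /andP [h1 h2].
    by rewrite ltnNge h1 in h2.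
  have [t2 [t2le [cl2 no2]]] : exists t2, (t2 <= b)%N /\
      `|w t2 - f (tg (S b))| < c /\ forall u, (t2 <= u < b)%N -> ~~ sw u.
    case/orP: hw => [/Iw [t3 [lt [cl no]]]|cl].
      by exists t3; split => //; exact: ltnW.
    exists b; split => //; split => // u /andP [h1 h2].
    by rewrite ltnNge h1 in h2.
  have at1 : (a < t1)%N.
    rewrite ltnNge; apply/negP => h.
    by have := no1 a; rewrite h ab swa => /(_ isT).
  have at2 : (a < t2)%N.
    rewrite ltnNge; apply/negP => h.
    by have := no2 a; rewrite h ab swa => /(_ isT).
  have := Hv1 t1 (leq_trans (leq_maxl _ _) (leq_trans Na (ltnW at1))).
  have := Hw1 t2 (leq_trans (leq_maxr _ _) (leq_trans Na (ltnW at2))).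
  move: cl1 cl2; rewrite !ltr_norml => /andP [p1 p2] /andP [p3 p4] p5 p6.
  apply/andP; split; lra.
have [s1 /andP [hs1 sws1]] := Hinf' (maxn N1 N2).
have [s2 /andP [hs2 sws2]] := Hinf' s1.+1.
have ex3 : exists u, (s2 < u)%N && sw u := Hinf' s2.+1.
case: (ex_minnP ex3) => s3 /andP [h3 sw3] min3.
have cst : tg (S s3) = tg (S s2.+1).
  rewrite -(subnKC h3); apply: Hcst => u /andP [h1 h2].
  rewrite subnKC // in h2.
  apply/negP => swu; have := min3 u; rewrite h1 swu => /(_ isT).
  by rewrite leqNgt h2.
have [Hn _] := Hs s2 sws2.
have [_ [_ far]] := Hnewt (tg (S s2)) s2.+1 (HCS s2).
rewrite -Hn -cst in far.
have d2 := D s1 s2 hs1 hs2 sws1 sws2.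
have d3 := D s1 s3 hs1 (ltn_trans hs2 h3) sws1 sw3.
move: d2 d3 far; rewrite !ltr_norml ltr_normr => /andP [p1 p2] /andP [p3 p4].
case/orP => p5; (suff : e < e by rewrite ltxx); lra.
Qed.
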